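(* Let $t\mapsto\zeta(t)=(\xi(t),\eta(t))$, $t\in I$, be a solution of the unperturbed system $(\mathrm P_0)$ such that $\epsilon(t)\neq0$, $n^j(t)\neq0$ and $V^j(t)\neq0$ for all $j\in\{1,\dots,S\}$ and all $t\in I$. Then the Jacobian $D_\eta g_0(\zeta(t))$ is singular for every $t\in I$.
   Context: Fix integers $S\ge 2$, $C\ge 2$ and an interval $I\subset\mathbb R$. Given are continuously differentiable real functions $f_{\mathrm{vle},i}(P,T,\mathbf x)$ ($i=1,\dots,C$), $f_{\mathrm{hl}}(T,\mathbf x)$, $f_{\mathrm{hv}}(T,\mathbf y)$, $f_{\mathrm{holdup}}(L)$. Controls are continuously differentiable real functions $\epsilon,P,Q,T^{\mathrm{cond}}$ on $I$. State variables: $n^j,H^j,T^j,V^j$, $\mathbf x^j,\mathbf y^j\in\mathbb R^C$ ($j=1,\dots,S$), $L^j$ ($j=1,\dots,S-1$); a solution is a tuple of continuously differentiable state functions satisfying all equations at every $t\in I$. ''$2\le j\le S-1$'' marks middle-stage equations. The system $(\mathrm P_0)$ consists of: (TM) $\dot n^1=L^1-V^1$; $\dot n^j=L^j-V^j-L^{j-1}+V^{j-1}$ ($2\le j\le S-1$); $\dot n^S=-\epsilon V^S-L^{S-1}+V^{S-1}$; (CM$_0$) for $i=1,\dots,C-1$: $\dot x_i^1=\big(L^1(x_i^2-x_i^1)-V^1(y_i^1-x_i^1)\big)/n^1$; $\dot x_i^j=\big(L^j(x_i^{j+1}-x_i^j)-V^j(y_i^j-x_i^j)+V^{j-1}(y_i^{j-1}-x_i^j)\big)/n^j$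 ($2\le j\le S-1$); $\dot x_i^S=\big(\epsilon V^S(x_i^S-y_i^S)+V^{S-1}(y_i^{S-1}-x_i^S)\big)/n^S$; (EB) $\dot H^1=L^1f_{\mathrm{hl}}(T^2,\mathbf x^2)-V^1f_{\mathrm{hv}}(T^1,\mathbf y^1)+Q$; $\dot H^j=L^jf_{\mathrm{hl}}(T^{j+1},\mathbf x^{j+1})-V^jf_{\mathrm{hv}}(T^j,\mathbf y^j)-L^{j-1}f_{\mathrm{hl}}(T^j,\mathbf x^j)+V^{j-1}f_{\mathrm{hv}}(T^{j-1},\mathbf y^{j-1})$ ($2\le j\le S-1$); $\dot H^S=(1-\epsilon)V^Sf_{\mathrm{hl}}(T^{\mathrm{cond}},\mathbf y^S)-V^Sf_{\mathrm{hv}}(T^S,\mathbf y^S)-L^{S-1}f_{\mathrm{hl}}(T^S,\mathbf x^S)+V^{S-1}f_{\mathrm{hv}}(T^{S-1},\mathbf y^{S-1})$; and the algebraic equations $g_0=0$, where, with $\delta_i^j:=0$: $\mathrm{aux}^1_\delta=\sum_{i=1}^C\big(L^1(x_i^2-x_i^1-\delta_i^1)-V^1(y_i^1-x_i^1-\delta_i^1)\big)/n^1$; for $2\le j\le S-1$, $\mathrm{aux}^j_\delta=\sum_{i=1}^C\big(L^j(x_i^{j+1}-x_i^j-\delta_i^j)-V^j(y_i^j-x_i^j-\delta_i^j)+V^{j-1}(y_i^{j-1}-x_i^j-\delta_i^j)\big)/n^j$; $\mathrm{aux}^S_\delta=\sum_{i=1}^C\big(\epsilon V^S(x_i^S+\delta_i^S-y_i^S)+V^{S-1}(y_i^{S-1}-x_i^S-\delta_i^S)\big)/n^S$;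 $\mathrm{ydef}_i^j=y_i^j-f_{\mathrm{vle},i}(P,T^j,\mathbf x^j)$; $\mathrm{edef}^j=H^j-n^jf_{\mathrm{hl}}(T^j,\mathbf x^j)$; $\mathrm{xsum}^j=x_C^j-1+\sum_{i=1}^{C-1}x_i^j$; $\mathrm{hold}^j=n^j-f_{\mathrm{holdup}}(L^{j-1})$ ($j=2,\dots,S$); collected as $g_\delta=(\mathrm{aux}^S_\delta,\dots,\mathrm{aux}^1_\delta,\mathbf{ydef}^1,\dots,\mathbf{ydef}^S,\mathrm{edef}^1,\dots,\mathrm{edef}^S,\mathrm{xsum}^1,\dots,\mathrm{xsum}^S,\mathrm{hold}^2,\dots,\mathrm{hold}^S)$ with $\mathbf{ydef}^j=(\mathrm{ydef}^j_1,\dots,\mathrm{ydef}^j_C)$. Differential variables $\xi=(n^1,\dots,n^S,\hat{\mathbf x}^1,\dots,\hat{\mathbf x}^S,H^1,\dots,H^S)$, $\hat{\mathbf x}^j=(x_1^j,\dots,x_{C-1}^j)$; algebraic variables $\eta=(V^S,\dots,V^1,\mathbf y^1,\dots,\mathbf y^S,T^1,\dots,T^S,x_C^1,\dots,x_C^S,L^1,\dots,L^{S-1})$. $D_\eta g_0$ is the Jacobian of $g_0$ with respect to $\eta$ (with $\xi$ and the controls held fixed). *)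

(* Defs.v *)
From HB Require Import structures.
From mathcomp Require Import all_boot all_order all_algebra.
From mathcomp Require Import all_classical all_reals all_analysis.
Set Implicit Arguments. Unset Strict Implicit. Unset Printing Implicit Defensive.
Import Order.TTheory GRing.Theory Num.Theory.
Import numFieldNormedType.Exports.
Local Open Scope classical_set_scope.
Local Open Scope ring_scope.

Section Column.
Variable R : realType.

Definition deriv_on (I : set R) (f f' : R -> R) : Prop :=
  forall t, I t ->
    (fun s => (f s - f t) / (s - t)) @ within (I `\ t) (nbhs t) --> f' t.

Definition C1_on (I : set R) (f : R -> R) : Prop :=
  exists f', deriv_on I f f' /\ {within I, continuous f'}.

(* continuously differentiable on a whole normed space U:
   differentiable everywhere and the derivative depends continuously on the
   point (tested on each direction; equivalent in finite dimension). *)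
Definition C1 (U : normedModType R) (F : U -> R) : Prop :=
  (forall p, differentiable F p) /\ (forall v, continuous (fun p => 'd F p v)).

(* Stages are numbered j = 1..S, components i = 1..C (as in the paper). *)

Definition Neta (S C : nat) : nat := (S + S * C + S + S + (S - 1))%N.

Definition at_ {n : nat} (v : 'rV[R]_n) (k : nat) : R :=
  if (insub k : option 'I_n) is Some i then v ord0 i else 0.

(* eta = (V^S,...,V^1, y^1,...,y^S, T^1,...,T^S, x_C^1,...,x_C^S, L^1,...,L^{S-1}) *)
Definition aV  (S C : nat) (e : 'rV[R]_(Neta S C)) (j : nat) : R := at_ e (S - j).
Definition ay  (S C : nat) (e : 'rV[R]_(Neta S C)) (j i : nat) : R :=
  at_ e (S + (j - 1) * C + (i - 1)).
Definition aT  (S C : nat) (e : 'rV[R]_(Neta S C)) (j : nat) : R :=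
  at_ e (S + S * C + (j - 1)).
Definition axC (S C : nat) (e : 'rV[R]_(Neta S C)) (j : nat) : R :=
  at_ e (S + S * C + S + (j - 1)).
Definition aL  (S C : nat) (e : 'rV[R]_(Neta S C)) (j : nat) : R :=
  at_ e (S + S * C + S + S + (j - 1)).

(* full composition x^j_i, i = 1..C: x_i^j (differential) for i < C, x_C^j from eta *)
Definition xfull (S C : nat) (xh : nat -> nat -> R) (e : 'rV[R]_(Neta S C))
  (j i : nat) : R := if (i < C)%N then xh j i else axC e j.

Definition xvec (S C : nat) (xh : nat -> nat -> R) (e : 'rV[R]_(Neta S C))
  (j : nat) : 'rV[R]_C := \row_(i < C) xfull xh e j i.+1.

Definition yvec (S C : nat) (e : 'rV[R]_(Neta S C)) (j : nat) : 'rV[R]_C :=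
  \row_(i < C) ay e j i.+1.

Definition aux0 (S C : nat) (eps : R) (n : nat -> R) (xh : nat -> nat -> R)
  (e : 'rV[R]_(Neta S C)) (j : nat) : R :=
  let x := xfull xh e in
  let y := ay e in
  let V := aV e in
  let L := aL e in
  if j == 1%N then
    (\sum_(1 <= i < C.+1) (L 1%N * (x 2%N i - x 1%N i) - V 1%N * (y 1%N i - x 1%N i)))
      / n 1%N
  else if j == S then
    (\sum_(1 <= i < C.+1) (eps * V S * (x S i - y S i)
                            + V (S - 1)%N * (y (S - 1)%N i - x S i))) / n S
  else
    (\sum_(1 <= i < C.+1) (L j * (x j.+1 i - x j i) - V j * (y j i - x j i)
                            + V (j - 1)%N * (y (j - 1)%N i - x j i))) / n j.

(* the algebraic right-hand side g_0, as a function of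
   the controls (eps, P), the differential variables (n, xhat, H)
   and the algebraic variables eta *)
Definition g0 (S C : nat)
  (fvle : nat -> R -> R -> 'rV[R]_C -> R) (fhl : R -> 'rV[R]_C -> R)
  (fholdup : R -> R) (eps P : R)
  (n : nat -> R) (xh : nat -> nat -> R) (H : nat -> R)
  (e : 'rV[R]_(Neta S C)) : 'rV[R]_(Neta S C) :=
  \row_(k < Neta S C)
    if (k < S)%N then aux0 eps n xh e (S - k)
    else if (k < S + S * C)%N then
      let j := ((k - S) %/ C).+1 in let i := ((k - S) %% C).+1 in
      ay e j i - fvle i P (aT e j) (xvec xh e j)
    else if (k < S + S * C + S)%N then
      let j := (k - (S + S * C)).+1 in
      H j - n j * fhl (aT e j) (xvec xh e j)
    else if (k < S + S * C + S + S)%N then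
      let j := (k - (S + S * C + S)).+1 in
      axC e j - 1 + \sum_(1 <= i < C) xh j i
    else
      let j := (k - (S + S * C + S + S)).+2 in
      n j - fholdup (aL e (j - 1)%N).

Definition jac_eta {N : nat} (F : 'rV[R]_N -> 'rV[R]_N) (e : 'rV[R]_N) : 'M[R]_N :=
  \matrix_(r < N, c < N) 'D_(delta_mx ord0 c) (fun z => F z ord0 r) e.

Definition odes_hold (S C : nat)
  (fhl : R -> 'rV[R]_C -> R) (fhv : R -> 'rV[R]_C -> R)
  (eps Q Tcond : R)
  (n : nat -> R) (xh : nat -> nat -> R) (e : 'rV[R]_(Neta S C))
  (dn : nat -> R) (dxh : nat -> nat -> R) (dH : nat -> R) : Prop :=
  let V := aV e in let L := aL e in let y := ay e in let T := aT e in
  let x := xvec xh e in let yv := yvec e in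
  [/\ dn 1%N = L 1%N - V 1%N,
      (forall j, (2 <= j <= S - 1)%N ->
         dn j = L j - V j - L (j - 1)%N + V (j - 1)%N),
      dn S = - eps * V S - L (S - 1)%N + V (S - 1)%N,
      (forall i, (1 <= i <= C - 1)%N ->
        [/\ dxh 1%N i = (L 1%N * (xh 2%N i - xh 1%N i) - V 1%N * (y 1%N i - xh 1%N i))
                         / n 1%N,
            (forall j, (2 <= j <= S - 1)%N ->
               dxh j i = (L j * (xh j.+1 i - xh j i) - V j * (y j i - xh j i)
                          + V (j - 1)%N * (y (j - 1)%N i - xh j i)) / n j) &
            dxh S i = (eps * V S * (xh S i - y S i)
                       + V (S - 1)%N * (y (S - 1)%N i - xh S i)) / n S])
  &
   [/\ dH 1%N = L 1%N * fhl (T 2%N) (x 2%N) - V 1%N * fhv (T 1%N) (yv 1%N) + Q,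
       (forall j, (2 <= j <= S - 1)%N ->
          dH j = L j * fhl (T j.+1) (x j.+1) - V j * fhv (T j) (yv j)
                 - L (j - 1)%N * fhl (T j) (x j) + V (j - 1)%N * fhv (T (j - 1)%N) (yv (j - 1)%N)) &
       dH S = (1 - eps) * V S * fhl Tcond (yv S) - V S * fhv (T S) (yv S)
              - L (S - 1)%N * fhl (T S) (x S) + V (S - 1)%N * fhv (T (S - 1)%N) (yv (S - 1)%N)]].

Definition solution_P0 (S C : nat) (I : set R)
  (fvle : nat -> R -> R -> 'rV[R]_C -> R) (fhl fhv : R -> 'rV[R]_C -> R)
  (fholdup : R -> R) (eps P Q Tcond : R -> R)
  (n : nat -> R -> R) (xh : nat -> nat -> R -> R) (H : nat -> R -> R)
  (eta : R -> 'rV[R]_(Neta S C)) : Prop :=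
  [/\ (forall j, (1 <= j <= S)%N -> C1_on I (n j) /\ C1_on I (H j)),
      (forall j i, (1 <= j <= S)%N -> (1 <= i <= C - 1)%N -> C1_on I (xh j i)),
      (forall k : 'I_(Neta S C), C1_on I (fun t => eta t ord0 k)) &
      exists (dn : nat -> R -> R) (dxh : nat -> nat -> R -> R) (dH : nat -> R -> R),
        [/\ (forall j, (1 <= j <= S)%N -> deriv_on I (n j) (dn j) /\ deriv_on I (H j) (dH j)),
            (forall j i, (1 <= j <= S)%N -> (1 <= i <= C - 1)%N ->
               deriv_on I (xh j i) (dxh j i)) &
            forall t, I t ->
              odes_hold fhl fhv (eps t) (Q t) (Tcond t)
                (fun j => n j t) (fun j i => xh j i t) (eta t)
                (fun j => dn j t) (fun j i => dxh j i t) (fun j => dH j t)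
              /\ g0 fvle fhl fholdup (eps t) (P t)
                   (fun j => n j t) (fun j i => xh j i t) (fun j => H j t) (eta t) = 0]].

End Column.

(* Main.v *)
Require Import Defs.
From HB Require Import structures.
From mathcomp Require Import all_boot all_order all_algebra.
From mathcomp Require Import all_classical all_reals all_analysis.
From mathcomp Require Import ring lra zify.
Import Order.TTheory GRing.Theory Num.Theory.
Import numFieldNormedType.Exports.
Local Open Scope classical_set_scope.
Local Open Scope ring_scope.

Section S1.
Variable R : realType.

Lemma at_shift N (c0 : 'I_N) (hc : val c0 = 0%N) (h : R) (e : 'rV[R]_N) k :
  at_ (h *: delta_mx ord0 c0 + e) k = at_ e k + (k == 0%N)%:R * h.
Proof.
rewrite /at_; case: insubP => [i ik ei|]; rewrite ?mxE /=.
  rewrite addrC; congr (_ + _); rewrite -ei.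
  have -> : (i == c0) = (val i == 0%N) by rewrite -hc; apply/eqP/eqP => [->|/val_inj].
  by rewrite mulrC.
move=> hk; case: eqP => [k0|]; last by rewrite mulr0n mul0r addr0.
by exfalso; move: hk; rewrite k0 -hc ltn_ord.
Qed.

End S1.

Section S2.
Variable R : realType.
Variables (S C : nat) (hS : (2 <= S)%N).
Variable c0 : 'I_(Neta S C).
Hypothesis hc : val c0 = 0%N.
Variables (h : R) (e : 'rV[R]_(Neta S C)).
Let e' := h *: delta_mx ord0 c0 + e.
Let S0 : (S == 0)%N = false.
Proof. by apply/negbTE; rewrite -lt0n (leq_trans _ hS). Qed.

Lemma aV_sh j : aV e' j = aV e j + (S - j == 0)%N%:R * h.
Proof. by rewrite /aV /e' at_shift. Qed.

Lemma ay_sh : ay e' = ay e.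
Proof.
apply: funext => j; apply: funext => i.
rewrite /ay /e' at_shift //; case: eqP => [|]; last by rewrite mulr0n mul0r addr0.
by move=> /eqP; rewrite !addn_eq0 S0.
Qed.

Lemma aT_sh : aT e' = aT e.
Proof.
apply: funext => j.
rewrite /aT /e' at_shift //; case: eqP => [|]; last by rewrite mulr0n mul0r addr0.
by move=> /eqP; rewrite !addn_eq0 S0.
Qed.

Lemma axC_sh : axC e' = axC e.
Proof.
apply: funext => j.
rewrite /axC /e' at_shift //; case: eqP => [|]; last by rewrite mulr0n mul0r addr0.
by move=> /eqP; rewrite !addn_eq0 S0.
Qed.

Lemma aL_sh : aL e' = aL e.
Proof.
apply: funext => j.
rewrite /aL /e' at_shift //; case: eqP => [|]; last by rewrite mulr0n mul0r addr0.
by move=> /eqP; rewrite !addn_eq0 S0.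
Qed.

Lemma xfull_sh xh : xfull xh e' = xfull xh e.
Proof. by rewrite /xfull axC_sh. Qed.

Lemma xvec_sh xh : xvec xh e' = xvec xh e.
Proof. by rewrite /xvec xfull_sh. Qed.


Lemma row_sh fvle fhl fholdup eps P n xh H r
  (hsum : \sum_(1 <= i < C.+1) (xfull xh e S i - ay e S i) = 0) :
  g0 fvle fhl fholdup eps P n xh H (h *: delta_mx ord0 c0 + e) ord0 r =
  g0 fvle fhl fholdup eps P n xh H e ord0 r.
Proof.
rewrite !mxE ay_sh aT_sh xvec_sh axC_sh aL_sh.
case: ifP => // rS.
rewrite /aux0 xfull_sh ay_sh aL_sh !aV_sh !subn_eq0.
have S1 : (S <= 1)%N = false by rewrite leqNgt hS.
have [r0|rp] := eqVneq (val r) 0%N.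
  rewrite r0 subn0 eqxx leqnn.
  have -> : (S <= S - 1)%N = false by apply/negbTE; lia.
  have -> : (S == 1)%N = false by apply/negbTE; rewrite neq_ltn hS orbT.
  rewrite !mul0r !addr0 mul1r; congr (_ / _).
  have key : forall X : R, X = X + eps * h * \sum_(1 <= i < C.+1) (xfull xh e S i - ay e S i).
    by move=> X; rewrite hsum mulr0 addr0.
  rewrite [RHS]key mulr_sumr -big_split.
  by apply: eq_bigr => i _ /=; ring.
have jS : (S - r < S)%N by rewrite ltn_subrL lt0n rp (leq_trans _ hS).
have -> : (S <= S - r)%N = false by apply/negbTE; lia.
have -> : (S <= S - r - 1)%N = false by apply/negbTE; lia.
have -> : (S - r == S)%N = false by apply/negbTE; lia.
rewrite S1 !mul0r !addr0.
by case: ifP.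
Qed.

End S2.

Section S4.
Variable R : realType.
Variables (S C : nat) (hS : (2 <= S)%N) (hC : (2 <= C)%N).
Variables (fvle : nat -> R -> R -> 'rV[R]_C -> R) (fhl : R -> 'rV[R]_C -> R)
  (fholdup : R -> R) (eps P : R) (n : nat -> R) (xh : nat -> nat -> R) (H : nat -> R)
  (e : 'rV[R]_(Neta S C)).
Hypothesis hg : g0 fvle fhl fholdup eps P n xh H e = 0.
Hypothesis heps : eps != 0.
Hypothesis hn : forall j, (1 <= j <= S)%N -> n j != 0.
Hypothesis hV : forall j, (1 <= j <= S)%N -> aV e j != 0.

Lemma row0 k (hk : (k < Neta S C)%N) :
  g0 fvle fhl fholdup eps P n xh H e ord0 (Ordinal hk) = 0.
Proof. by rewrite hg mxE. Qed.

Lemma xsum1 j : (1 <= j <= S)%N -> \sum_(1 <= i < C.+1) xfull xh e j i = 1.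
Proof.
move=> hj.
have hk : (S + S * C + S + (j - 1) < Neta S C)%N by rewrite /Neta; lia.
have := row0 _ hk; rewrite mxE /=.
have -> : (S + S * C + S + (j - 1) < S)%N = false by lia.
have -> : (S + S * C + S + (j - 1) < S + S * C)%N = false by lia.
have -> : (S + S * C + S + (j - 1) < S + S * C + S)%N = false by lia.
have -> : (S + S * C + S + (j - 1) < S + S * C + S + S)%N = true by lia.
have -> : (S + S * C + S + (j - 1) - (S + S * C + S)).+1 = j by lia.
rewrite big_nat_recr /=; last by lia.
rewrite /xfull ltnn.
move=> H0; under eq_big_nat => i /andP[_ hi] do rewrite hi.
by move/eqP: H0; rewrite addrAC subr_eq0 addrC => /eqP.
Qed.

Lemma aux0_0 j : (1 <= j <= S)%N -> aux0 eps n xh e j = 0.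
Proof.
move=> hj.
have hk : (S - j < Neta S C)%N by rewrite /Neta; lia.
have := row0 _ hk; rewrite mxE /=.
have -> : (S - j < S)%N = true by lia.
by have -> : (S - (S - j))%N = j by lia.
Qed.

Lemma sumA (a : R) (f g : nat -> R) :
  \sum_(1 <= i < C.+1) (a * (f i - g i)) =
  a * (\sum_(1 <= i < C.+1) f i - \sum_(1 <= i < C.+1) g i).
Proof. by rewrite -sumrB mulr_sumr. Qed.

Definition sy j := \sum_(1 <= i < C.+1) ay e j i.

Lemma sy1_low j : (1 <= j <= S - 1)%N -> sy j = 1.
Proof.
elim: j => [//|j IH] hj.
have hj' : (1 <= j.+1 <= S)%N by lia.
have := aux0_0 _ hj'; rewrite /aux0.
have -> : (j.+1 == S) = false by apply/negbTE; lia.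
move=> A.
have E2 : aV e j.+1 * (sy j.+1 - 1) = 0.
  move: A; case: (eqVneq j 0) => [j0|jn0].
    rewrite j0 /= sumrB !sumA (xsum1 2) ?(xsum1 1); try lia.
    move/eqP; rewrite mulf_eq0 invr_eq0 (negbTE (hn 1 (_ : (1 <= 1 <= S)%N))) ?orbF; last by lia.
    rewrite /sy => /eqP E; lra.
  have -> : (j.+1 == 1) = false by apply/negbTE; lia.
  rewrite big_split /= sumrB !sumA (xsum1 j.+2) ?(xsum1 j.+1); try lia.
  have -> : (j.+1 - 1 = j)%N by lia.
  move/eqP; rewrite mulf_eq0 invr_eq0 (negbTE (hn _ hj')) orbF => /eqP.
  have := IH; rewrite /sy => sj.
  rewrite sj; last by lia.
  move=> E; lra.
move/eqP: E2; rewrite mulf_eq0 (negbTE (hV _ hj')) /= subr_eq0.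
by move/eqP.
Qed.

Lemma syS : sy S = 1.
Proof.
have hj' : (1 <= S <= S)%N by lia.
have := aux0_0 _ hj'; rewrite /aux0 eqxx.
have -> : (S == 1) = false by apply/negbTE; lia.
move/eqP; rewrite mulf_eq0 invr_eq0 (negbTE (hn _ hj')) orbF => /eqP.
rewrite big_split /= -mulr_sumr sumrB !sumA (xsum1 S) //.
have := sy1_low (S - 1) (_ : (1 <= S - 1 <= S - 1)%N); rewrite /sy => sj.
rewrite sj; last by lia.
move=> E.
have E2 : (eps * aV e S) * (1 - sy S) = 0 by rewrite /sy; lra.
move/eqP: E2; rewrite !mulf_eq0 (negbTE heps) (negbTE (hV _ hj')) /= subr_eq0.
by move/eqP.
Qed.

Lemma hsumS : \sum_(1 <= i < C.+1) (xfull xh e S i - ay e S i) = 0.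
Proof.
rewrite sumrB (xsum1 S); last by lia.
by have := syS; rewrite /sy => ->; rewrite subrr.
Qed.

End S4.

Theorem mainTheorem5 (R : realType) (S C : nat) (hS : (2 <= S)%N) (hC : (2 <= C)%N)
  (I : set R) (hI : is_interval I)
  (fvle : nat -> R -> R -> 'rV[R]_C -> R) (fhl fhv : R -> 'rV[R]_C -> R)
  (fholdup : R -> R)
  (hfvle : forall i, (1 <= i <= C)%N ->
     C1 (fun p : R * R * 'rV[R]_C => fvle i p.1.1 p.1.2 p.2))
  (hfhl : C1 (fun p : R * 'rV[R]_C => fhl p.1 p.2))
  (hfhv : C1 (fun p : R * 'rV[R]_C => fhv p.1 p.2))
  (hfholdup : C1 fholdup)
  (eps P Q Tcond : R -> R)
  (heps : C1_on I eps) (hP : C1_on I P) (hQ : C1_on I Q) (hTcond : C1_on I Tcond)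
  (n : nat -> R -> R) (xh : nat -> nat -> R -> R) (H : nat -> R -> R)
  (eta : R -> 'rV[R]_(Neta S C))
  (hsol : solution_P0 I fvle fhl fhv fholdup eps P Q Tcond n xh H eta)
  (heps0 : forall t, I t -> eps t != 0)
  (hn0 : forall t j, I t -> (1 <= j <= S)%N -> n j t != 0)
  (hV0 : forall t j, I t -> (1 <= j <= S)%N -> aV (eta t) j != 0) :
  forall t, I t ->
    \det (jac_eta
            (g0 fvle fhl fholdup (eps t) (P t)
               (fun j => n j t) (fun j i => xh j i t) (fun j => H j t))
            (eta t)) = 0.
Proof.
move=> t It.
case: hsol => _ _ _ [dn [dxh [dH [_ _ hall]]]].
have hg := (hall t It).2.
have hsum := @hsumS R S C hS hC _ _ _ _ _ _ _ _ _ hg (heps0 t It) (fun j hj => hn0 t j It hj)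
  (fun j hj => hV0 t j It hj).
have h0 : (0 < Neta S C)%N by rewrite /Neta; lia.
pose c0 : 'I_(Neta S C) := Ordinal h0.
rewrite (expand_det_col _ c0) big1 // => r _.
rewrite [X in X * _]mxE /derive.
set f := fun h : R => _.
have -> : f = fun _ => 0.
  apply: funext => h; rewrite /f /= /shift.
  by rewrite (@row_sh R S C hS c0) // subrr scaler0.
by rewrite lim_cst // mul0r.
Qed.
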